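(* Let $G$ be a connected undirected weighted graph on $n$ nodes (weights normalized as below) with maximum weighted degree $d_{\max}<\frac{n^{1/5}}{16\ln n}$. Then, for all sufficiently large $n$, $\mathsf{OPT}(G)>\frac{1}{8\,d_{\max}}$.
   Context: Weighted modularity: $G=(V,E,\ell)$ is an undirected graph with nonnegative edge weights $\ell$; $a_{u,v}=\ell(u,v)$ if $\{u,v\}\in E$ and $0$ otherwise; $d_u=\sum_{v}a_{u,v}$ is the weighted degree, $d_{\max}=\max_v d_v$. Weights are normalized (by a common scaling, which does not change modularity) so that $\sum_{v\in V}d_v=2|E|$, and $m=\frac12\sum_v d_v$. For $C\subseteq V$, $\mathsf M(C)=\frac{1}{2m}\sum_{u\in C}\sum_{v\in C}\big(a_{u,v}-\frac{d_ud_v}{2m}\big)$, the sum over all ordered pairs including $u=v$. A clustering is a partition $\mathcal S$ of $V$ into nonempty clusters, $\mathsf M(\mathcal S)=\sum_{C\in\mathcal S}\mathsf M(C)$, and $\mathsf{OPT}(G)$ is the maximum of $\mathsf M(\mathcal S)$ over all clusterings. *)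

(* Defs.v *)
From Stdlib Require Import Reals Lra Lia Arith.
Open Scope R_scope.

(* Vertices of a graph on n nodes are 0, ..., n-1. *)

Fixpoint fsum (n : nat) (f : nat -> R) : R :=
  match n with
  | O => 0
  | S k => fsum k f + f k
  end.

Fixpoint ncount (n : nat) (P : nat -> bool) : nat :=
  match n with
  | O => O
  | S k => (ncount k P + (if P k then 1 else 0))%nat
  end.

Definition wgraph (n : nat) (E : nat -> nat -> bool) (l : nat -> nat -> R) : Prop :=
  (forall u v, (u < n)%nat -> (v < n)%nat -> E u v = E v u) /\
  (forall u, (u < n)%nat -> E u u = false) /\
  (forall u v, (u < n)%nat -> (v < n)%nat -> l u v = l v u) /\
  (forall u v, (u < n)%nat -> (v < n)%nat -> 0 <= l u v).

Definition adj (E : nat -> nat -> bool) (l : nat -> nat -> R) (u v : nat) : R :=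
  if E u v then l u v else 0.

Definition deg (n : nat) E l (u : nat) : R := fsum n (fun v => adj E l u v).

Fixpoint maxupto (k : nat) (f : nat -> R) : R :=
  match k with
  | O => 0
  | S j => Rmax (maxupto j f) (f j)
  end.
Definition dmax (n : nat) E l : R := maxupto n (deg n E l).

(* |E| : number of unordered pairs {u,v} with u < v < n that are edges *)
Fixpoint num_edges_upto (k : nat) (E : nat -> nat -> bool) : nat :=
  match k with
  | O => O
  | S v => (num_edges_upto v E + ncount v (fun u => E u v))%nat
  end.
Definition num_edges (n : nat) E : nat := num_edges_upto n E.

Definition normalized (n : nat) E l : Prop :=
  fsum n (deg n E l) = 2 * INR (num_edges n E).

Definition mtot (n : nat) E l : R := fsum n (deg n E l) / 2.

Inductive reach (n : nat) (E : nat -> nat -> bool) (u : nat) : nat -> Prop :=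
  | reach_refl : reach n E u u
  | reach_step : forall w v, reach n E u w -> (w < n)%nat -> (v < n)%nat ->
                 E w v = true -> reach n E u v.
Definition connected (n : nat) E : Prop :=
  forall u v, (u < n)%nat -> (v < n)%nat -> reach n E u v.

Definition Mod_cluster (n : nat) E l (C : nat -> bool) : R :=
  let m := mtot n E l in
  / (2 * m) * fsum n (fun u => fsum n (fun v =>
     if andb (C u) (C v) then adj E l u v - deg n E l u * deg n E l v / (2 * m)
     else 0)).

(* A clustering is represented by a labelling c : vertex -> label < n;
   the clusters are the nonempty fibres {v | c v = k}.  Empty fibres have
   modularity 0, so summing over all labels k < n gives sum_{C in S} M(C). *)
Definition is_clustering (n : nat) (c : nat -> nat) : Prop :=
  forall v, (v < n)%nat -> (c v < n)%nat.

Definition Mod (n : nat) E l (c : nat -> nat) : R :=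
  fsum n (fun k => Mod_cluster n E l (fun v => Nat.eqb (c v) k)).

(* OPT(G) > x  <->  some clustering has modularity > x
   (OPT is a maximum over the finitely many clusterings). *)
Definition OPT_gt (n : nat) E l (x : R) : Prop :=
  exists c, is_clustering n c /\ Mod n E l c > x.

(* Main.v *)
Require Import Defs.
From Stdlib Require Import Reals Lra Lia Arith Classical.
Open Scope R_scope.


Lemma fsum_ext n f g : (forall i, (i < n)%nat -> f i = g i) -> fsum n f = fsum n g.
Proof. induction n; simpl; intros H; auto. rewrite IHn by (intros; apply H; lia). rewrite H by lia; auto. Qed.
Lemma fsum_le n f g : (forall i, (i < n)%nat -> f i <= g i) -> fsum n f <= fsum n g.
Proof. induction n; simpl; intros H; [lra|]. assert (fsum n f <= fsum n g) by (apply IHn; intros; apply H; lia). assert (f n <= g n) by (apply H; lia). lra. Qed.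
Lemma fsum_plus n f g : fsum n (fun i => f i + g i) = fsum n f + fsum n g.
Proof. induction n; simpl; [lra|]. rewrite IHn; lra. Qed.
Lemma fsum_minus n f g : fsum n (fun i => f i - g i) = fsum n f - fsum n g.
Proof. induction n; simpl; [lra|]. rewrite IHn; lra. Qed.
Lemma fsum_scal n c f : fsum n (fun i => c * f i) = c * fsum n f.
Proof. induction n; simpl; [lra|]. rewrite IHn; lra. Qed.
Lemma fsum_zero n : fsum n (fun _ => 0) = 0.
Proof. induction n; simpl; [lra|]. rewrite IHn; lra. Qed.
Lemma fsum_swap n m f : fsum n (fun i => fsum m (fun j => f i j)) = fsum m (fun j => fsum n (fun i => f i j)).
Proof. induction n; simpl. - rewrite fsum_zero; auto. - rewrite IHn. rewrite <- fsum_plus. auto. Qed.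
Lemma fsum_nonneg n f : (forall i, (i < n)%nat -> 0 <= f i) -> 0 <= fsum n f.
Proof. intros H. rewrite <- (fsum_zero n). apply fsum_le; auto. Qed.
Lemma fsum_ge_term n f k : (forall i, (i < n)%nat -> 0 <= f i) -> (k < n)%nat -> f k <= fsum n f.
Proof. induction n; simpl; intros H Hk; [lia|].
  assert (0 <= fsum n f) by (apply fsum_nonneg; intros; apply H; lia).
  destruct (Nat.eq_dec k n). subst. lra.
  assert (f k <= fsum n f) by (apply IHn; [intros; apply H|]; lia). assert (0 <= f n) by (apply H; lia). lra. Qed.
Lemma fsum_ind n k c : (k < n)%nat -> fsum n (fun i => if Nat.eqb i k then c else 0) = c.
Proof. induction n; simpl; intros Hk; [lia|].
  destruct (Nat.eq_dec k n).
  - subst. rewrite Nat.eqb_refl. rewrite (fsum_ext _ _ (fun _ => 0)). rewrite fsum_zero; lra.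
    intros i Hi. destruct (Nat.eqb_spec i n); [lia|auto].
  - rewrite IHn by lia. destruct (Nat.eqb_spec n k); [lia|lra]. Qed.
Lemma maxupto_ge k f i : (i < k)%nat -> f i <= maxupto k f.
Proof. induction k; simpl; intros; [lia|]. destruct (Nat.eq_dec i k). subst; apply Rmax_r.
  eapply Rle_trans; [apply IHk; lia| apply Rmax_l]. Qed.
Lemma fsum_count n (P : nat -> bool) : fsum n (fun i => if P i then 1 else 0) = INR (ncount n P).
Proof. induction n; simpl; auto. rewrite IHn, plus_INR. destruct (P n); simpl; lra. Qed.


Lemma edges_double n (E : nat -> nat -> bool) :
  (forall u v, (u < n)%nat -> (v < n)%nat -> E u v = E v u) ->
  (forall u, (u < n)%nat -> E u u = false) ->
  forall k, (k <= n)%nat ->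
  fsum k (fun u => fsum k (fun v => if E u v then 1 else 0)) = 2 * INR (num_edges_upto k E).
Proof.
  intros Hs Hi. induction k; intros Hk; simpl; [lra|].
  rewrite fsum_plus. rewrite IHk by lia. rewrite plus_INR, <- fsum_count.
  rewrite Hi by lia.
  rewrite (fsum_ext k (fun v => if E k v then 1 else 0) (fun u => if E u k then 1 else 0)).
  lra. intros i Hi'. rewrite Hs by lia. auto.
Qed.

Lemma reach_last n E u v : reach n E u v -> v = u \/ exists w, (w < n)%nat /\ E w v = true.
Proof. intros H; destruct H; [left; auto| right; exists w; auto]. Qed.


Definition valid n E l (p : nat -> nat) := forall x, (x < n)%nat ->
  (p x < n)%nat /\ p (p x) = x /\ (p x <> x -> adj E l x (p x) >= 1/2).
Definition Mw E l (p : nat -> nat) x := if Nat.eqb (p x) x then 0 else adj E l x (p x).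
Definition Sw n E l p := fsum n (Mw E l p).
Definition swp (p : nat -> nat) u v x :=
  if Nat.eqb x u then v else if Nat.eqb x v then u else
  if orb (Nat.eqb (p x) u) (Nat.eqb (p x) v) then x else p x.
Definition indr (b : bool) c : R := if b then c else 0.

Lemma adj_sym n E l u v : wgraph n E l -> (u < n)%nat -> (v < n)%nat -> adj E l u v = adj E l v u.
Proof. intros (H1&H2&H3&H4) Hu Hv. unfold adj. rewrite H1 by auto. rewrite H3 by auto. auto. Qed.
Lemma adj_nonneg n E l u v : wgraph n E l -> (u < n)%nat -> (v < n)%nat -> 0 <= adj E l u v.
Proof. intros (H1&H2&H3&H4) Hu Hv. unfold adj. destruct (E u v); [apply H4; auto|lra]. Qed.
Lemma adj_diag n E l u : wgraph n E l -> (u < n)%nat -> adj E l u u = 0.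
Proof. intros (H1&H2&H3&H4) Hu. unfold adj. rewrite H2; auto. Qed.

Lemma Mw_nonneg n E l p x : wgraph n E l -> valid n E l p -> (x < n)%nat -> 0 <= Mw E l p x.
Proof. intros G V Hx. unfold Mw. destruct (Nat.eqb_spec (p x) x); [lra|].
  destruct (V x Hx) as (?&?&?). eapply adj_nonneg; eauto. Qed.
Lemma Mw_partner n E l p x : wgraph n E l -> valid n E l p -> (x < n)%nat -> Mw E l p (p x) = Mw E l p x.
Proof. intros G V Hx. destruct (V x Hx) as (H1&H2&H3). unfold Mw. rewrite H2.
  destruct (Nat.eqb_spec x (p x)); destruct (Nat.eqb_spec (p x) x); try lia; auto.
  eapply adj_sym; eauto. Qed.

Lemma swp_valid n E l p u v : wgraph n E l -> valid n E l p -> (u < n)%nat -> (v < n)%nat ->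
  u <> v -> adj E l u v >= 1/2 -> valid n E l (swp p u v).
Proof.
  intros G V Hu Hv Huv Ha x Hx. destruct (V x Hx) as (H1&H2&H3). unfold swp.
  destruct (Nat.eqb_spec x u).
  { subst. rewrite (proj2 (Nat.eqb_neq v u)) by auto. rewrite Nat.eqb_refl. split; auto. }
  destruct (Nat.eqb_spec x v).
  { subst. rewrite Nat.eqb_refl. split; auto. split; auto. intros. rewrite adj_sym with (n:=n); auto. }
  destruct (Nat.eqb_spec (p x) u); simpl.
  { rewrite (proj2 (Nat.eqb_neq x u)), (proj2 (Nat.eqb_neq x v)) by auto.
    rewrite e; simpl. rewrite Nat.eqb_refl. simpl. repeat split; auto. intros; congruence. }
  destruct (Nat.eqb_spec (p x) v); simpl.
  { rewrite (proj2 (Nat.eqb_neq x u)), (proj2 (Nat.eqb_neq x v)) by auto.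
    rewrite e; simpl. rewrite Nat.eqb_refl. rewrite Bool.orb_true_r. repeat split; auto. intros; congruence. }
  rewrite (proj2 (Nat.eqb_neq (p x) u)), (proj2 (Nat.eqb_neq (p x) v)) by auto.
  rewrite H2. rewrite (proj2 (Nat.eqb_neq x u)), (proj2 (Nat.eqb_neq x v)) by auto. simpl.
  repeat split; auto.
Qed.


Lemma swp_point n E l p u v x : wgraph n E l -> valid n E l p -> (u < n)%nat -> (v < n)%nat ->
  u <> v -> adj E l u v >= 1/2 -> p u <> v -> (x < n)%nat ->
  Mw E l (swp p u v) x + indr (Nat.eqb x u) (Mw E l p u) + indr (Nat.eqb x v) (Mw E l p v)
  + indr (Nat.eqb x (p u)) (Mw E l p u) + indr (Nat.eqb x (p v)) (Mw E l p v)
  >= Mw E l p x + indr (Nat.eqb x u) (adj E l u v) + indr (Nat.eqb x v) (adj E l u v).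
Proof.
  intros G V Hu Hv Huv Ha Hpuv Hx.
  destruct (V u Hu) as (U1&U2&U3). destruct (V v Hv) as (W1&W2&W3).
  assert (Hpvu : p v <> u) by (intro; subst; congruence).
  assert (Mu := Mw_nonneg _ _ _ _ _ G V Hu). assert (Mv := Mw_nonneg _ _ _ _ _ G V Hv).
  assert (Mx := Mw_nonneg _ _ _ _ _ G V Hx).
  unfold indr.
  destruct (Nat.eqb_spec x u).
  { subst. unfold Mw at 1, swp. rewrite Nat.eqb_refl. rewrite (proj2 (Nat.eqb_neq v u)) by auto.
    rewrite (proj2 (Nat.eqb_neq u v)) by auto.
    destruct (Nat.eqb_spec u (p v)); [congruence|]. destruct (Nat.eqb_spec u (p u)); lra. }
  destruct (Nat.eqb_spec x v).
  { subst. unfold Mw at 1, swp. rewrite Nat.eqb_refl. rewrite (proj2 (Nat.eqb_neq v u)) by auto.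
    rewrite (proj2 (Nat.eqb_neq u v)) by auto. rewrite (adj_sym n E l v u) by auto.
    destruct (Nat.eqb_spec v (p u)); [congruence|]. destruct (Nat.eqb_spec v (p v)); lra. }
  destruct (Nat.eqb_spec x (p u)).
  { subst. assert (Hx2: Mw E l (swp p u v) (p u) = 0).
    { unfold Mw, swp. rewrite (proj2 (Nat.eqb_neq (p u) u)), (proj2 (Nat.eqb_neq (p u) v)) by auto.
      rewrite U2, Nat.eqb_refl. simpl. rewrite Nat.eqb_refl. auto. }
    rewrite Hx2. rewrite (Mw_partner n) by auto.
    destruct (Nat.eqb_spec (p u) (p v)); [|lra]. assert (u = v) by congruence. congruence. }
  destruct (Nat.eqb_spec x (p v)).
  { subst. assert (Hx2: Mw E l (swp p u v) (p v) = 0).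
    { unfold Mw, swp. rewrite (proj2 (Nat.eqb_neq (p v) u)), (proj2 (Nat.eqb_neq (p v) v)) by auto.
      rewrite W2, Nat.eqb_refl. rewrite Bool.orb_true_r. rewrite Nat.eqb_refl. auto. }
    rewrite Hx2. rewrite (Mw_partner n) by auto. lra. }
  assert (Mw E l (swp p u v) x = Mw E l p x).
  { unfold Mw, swp. rewrite (proj2 (Nat.eqb_neq x u)), (proj2 (Nat.eqb_neq x v)) by auto.
    destruct (Nat.eqb_spec (p x) u). { destruct (V x Hx) as (_&X2&_). subst. congruence. }
    destruct (Nat.eqb_spec (p x) v). { destruct (V x Hx) as (_&X2&_). subst. congruence. }
    simpl. auto. }
  lra.
Qed.

Lemma swp_gain n E l p u v : wgraph n E l -> valid n E l p -> (u < n)%nat -> (v < n)%nat ->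
  adj E l u v >= 1/2 -> p u <> v ->
  Sw n E l (swp p u v) >= Sw n E l p + 2 * (adj E l u v - Mw E l p u - Mw E l p v).
Proof.
  intros G V Hu Hv Ha Hpuv.
  assert (Huv : u <> v) by (intro; subst; rewrite (adj_diag n) in Ha by auto; lra).
  destruct (V u Hu) as (U1&U2&U3). destruct (V v Hv) as (W1&W2&W3).
  assert (Hs := fsum_le n (fun x => Mw E l p x + indr (Nat.eqb x u) (adj E l u v) + indr (Nat.eqb x v) (adj E l u v))
    (fun x => Mw E l (swp p u v) x + indr (Nat.eqb x u) (Mw E l p u) + indr (Nat.eqb x v) (Mw E l p v)
  + indr (Nat.eqb x (p u)) (Mw E l p u) + indr (Nat.eqb x (p v)) (Mw E l p v))).
  assert (Hs' : forall i, (i < n)%nat -> Mw E l p i + indr (Nat.eqb i u) (adj E l u v) + indr (Nat.eqb i v) (adj E l u v) <=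
    Mw E l (swp p u v) i + indr (Nat.eqb i u) (Mw E l p u) + indr (Nat.eqb i v) (Mw E l p v)
  + indr (Nat.eqb i (p u)) (Mw E l p u) + indr (Nat.eqb i (p v)) (Mw E l p v)).
  { intros i Hi. apply Rge_le. apply swp_point with n; auto. }
  specialize (Hs Hs'). repeat rewrite fsum_plus in Hs. unfold indr in Hs.
  rewrite !fsum_ind in Hs by auto. unfold Sw. lra.
Qed.


Lemma near_opt n E l eps : wgraph n E l -> eps > 0 -> exists p, valid n E l p /\
  forall u v, (u < n)%nat -> (v < n)%nat -> adj E l u v >= 1/2 ->
  adj E l u v <= Mw E l p u + Mw E l p v + eps.
Proof.
  intros G He.
  set (A := fun r => exists p, valid n E l p /\ r = Sw n E l p).
  assert (Hb : bound A).
  { exists (fsum n (deg n E l)). intros r (p & V & ->). unfold Sw. apply fsum_le.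
    intros x Hx. destruct (V x Hx) as (H1&H2&H3). unfold Mw, deg.
    destruct (Nat.eqb (p x) x). apply fsum_nonneg; intros; eapply adj_nonneg; eauto.
    apply (fsum_ge_term n (fun v => adj E l x v)); auto. intros; eapply adj_nonneg; eauto. }
  assert (Hne : exists r, A r).
  { exists (Sw n E l (fun x => x)). exists (fun x => x). split; auto.
    intros x Hx. repeat split; auto. intros; congruence. }
  destruct (completeness A Hb Hne) as [L [HL1 HL2]].
  assert (exists p, valid n E l p /\ Sw n E l p > L - eps).
  { apply NNPP. intro Hn. assert (L <= L - eps); [|lra]. apply HL2.
    intros r (p & V & ->). apply Rnot_lt_le. intro Hlt. apply Hn. exists p. split; auto. }
  destruct H as (p & V & Hp). exists p. split; auto.
  intros u v Hu Hv Ha. apply Rnot_lt_le. intro Hlt.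
  destruct (Nat.eq_dec (p u) v).
  { assert (Mw E l p u = adj E l u v).
    { unfold Mw. subst v. destruct (Nat.eqb_spec (p u) u). rewrite e in Ha. rewrite (adj_diag n) in Ha by auto. lra. auto. }
    assert (0 <= Mw E l p v) by (apply Mw_nonneg with n; auto). lra. }
  assert (Hg := swp_gain n E l p u v G V Hu Hv Ha n0).
  assert (A (Sw n E l (swp p u v))).
  { exists (swp p u v). split; auto. apply swp_valid; auto.
    intro; subst; rewrite (adj_diag n) in Ha by auto; lra. }
  specialize (HL1 _ H). lra.
Qed.


Definition hh E l u v : R := if Rle_dec (1/2) (adj E l u v) then 1 else 0.

Lemma deg_le_dmax n E l u : (u < n)%nat -> deg n E l u <= dmax n E l.
Proof. intros; unfold dmax; apply maxupto_ge; auto. Qed.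

Lemma main_count n E l p eps : wgraph n E l -> normalized n E l -> valid n E l p ->
  (forall u v, (u < n)%nat -> (v < n)%nat -> adj E l u v >= 1/2 ->
    adj E l u v <= Mw E l p u + Mw E l p v + eps) -> eps > 0 ->
  mtot n E l <= (4 * dmax n E l - 1) * Sw n E l p + 4 * mtot n E l * eps.
Proof.
  intros G N V Hopt He. set (m := mtot n E l). set (D := dmax n E l).
  set (a := adj E l). set (M := Mw E l p).
  assert (Hm : fsum n (fun u => fsum n (fun v => a u v)) = 2 * m).
  { unfold m, mtot. unfold deg. unfold a. lra. }
  assert (HE : fsum n (fun u => fsum n (fun v => if E u v then 1 else 0)) = 2 * m).
  { destruct G as (G1&G2&_). rewrite edges_double with (n:=n) by auto. unfold m, mtot.
    rewrite N. unfold num_edges. lra. }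
  assert (Ha0 : forall u v, (u < n)%nat -> (v < n)%nat -> 0 <= a u v) by (intros; eapply adj_nonneg; eauto).
  assert (L1 : fsum n (fun u => fsum n (fun v => a u v)) <=
     fsum n (fun u => fsum n (fun v => hh E l u v * a u v + /2 * (if E u v then 1 else 0)))).
  { apply fsum_le; intros u Hu; apply fsum_le; intros v Hv. unfold hh. fold a.
    destruct (Rle_dec (1/2) (a u v)). assert (0 <= (if E u v then 1 else 0)) by (destruct (E u v); lra). lra.
    unfold a, adj in *. destruct (E u v); lra. }
  assert (L1' : m <= fsum n (fun u => fsum n (fun v => hh E l u v * a u v))).
  { assert (X: fsum n (fun u => fsum n (fun v => hh E l u v * a u v + /2 * (if E u v then 1 else 0)))
      = fsum n (fun u => fsum n (fun v => hh E l u v * a u v)) + /2 * (2 * m)).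
    { rewrite <- HE, <- fsum_scal, <- fsum_plus. apply fsum_ext; intros.
      rewrite <- fsum_scal, <- fsum_plus. auto. }
    lra. }
  assert (U1 : fsum n (fun u => fsum n (fun v => hh E l u v * a u v)) <=
     fsum n (fun u => fsum n (fun v => hh E l u v * M u + hh E l u v * M v + hh E l u v * eps
        - (if Nat.eqb v (p u) then M u else 0)))).
  { apply fsum_le; intros u Hu; apply fsum_le; intros v Hv.
    destruct (V u Hu) as (P1&P2&P3).
    assert (0 <= M u) by (apply Mw_nonneg with n; auto).
    destruct (Nat.eqb_spec v (p u)).
    - subst v. destruct (Nat.eq_dec (p u) u).
      + unfold M, Mw. rewrite e, Nat.eqb_refl. unfold a. rewrite (adj_diag n) by auto.
        unfold hh. rewrite (adj_diag n) by auto. destruct (Rle_dec _ _); lra.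
      + assert (Hmu : M u = a u (p u)) by (unfold M, Mw; rewrite (proj2 (Nat.eqb_neq _ _) n0); auto).
        assert (Hmp : M (p u) = M u) by (apply Mw_partner with n; auto).
        specialize (P3 n0). unfold hh. fold a. destruct (Rle_dec _ _); [|fold a in P3; lra]. lra.
    - unfold hh. fold a. destruct (Rle_dec _ _).
      + specialize (Hopt u v Hu Hv (Rle_ge _ _ r)). fold a M in Hopt. lra.
      + lra. }
  assert (Hh2 : forall u v, (u < n)%nat -> (v < n)%nat -> hh E l u v <= 2 * a u v).
  { intros u v Hu Hv. unfold hh. fold a. specialize (Ha0 u v Hu Hv). destruct (Rle_dec _ _); lra. }
  assert (Hh0 : forall u v, 0 <= hh E l u v) by (intros; unfold hh; destruct (Rle_dec _ _); lra).
  assert (Hrow : forall u, (u < n)%nat -> fsum n (fun v => hh E l u v) <= 2 * D).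
  { intros u Hu. apply Rle_trans with (fsum n (fun v => 2 * a u v)).
    apply fsum_le; auto. rewrite fsum_scal. assert (deg n E l u <= D) by (apply deg_le_dmax; auto).
    assert (H2 : fsum n (a u) <= D) by exact H. lra. }
  assert (HM0 : forall u, (u < n)%nat -> 0 <= M u) by (intros; apply Mw_nonneg with n; auto).
  assert (T1 : fsum n (fun u => fsum n (fun v => hh E l u v * M u)) <= 2 * D * Sw n E l p).
  { unfold Sw. rewrite <- fsum_scal. apply fsum_le; intros u Hu.
    rewrite (fsum_ext n _ (fun v => M u * hh E l u v)) by (intros; lra).
    rewrite fsum_scal. assert (R1 : fsum n (hh E l u) <= 2 * D) by exact (Hrow u Hu). specialize (HM0 u Hu). unfold M in *. nra. }
  assert (T2 : fsum n (fun u => fsum n (fun v => hh E l u v * M v)) <= 2 * D * Sw n E l p).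
  { rewrite fsum_swap. unfold Sw. rewrite <- fsum_scal. apply fsum_le; intros v Hv.
    rewrite (fsum_ext n _ (fun u => M v * hh E l v u)).
    rewrite fsum_scal. assert (R1 : fsum n (hh E l v) <= 2 * D) by exact (Hrow v Hv). specialize (HM0 v Hv). unfold M in *. nra.
    intros u Hu. unfold hh, a. rewrite (adj_sym n E l u v) by auto. lra. }
  assert (T3 : fsum n (fun u => fsum n (fun v => hh E l u v * eps)) <= 4 * m * eps).
  { apply Rle_trans with (fsum n (fun u => fsum n (fun v => 2 * eps * a u v))).
    apply fsum_le; intros u Hu; apply fsum_le; intros v Hv. specialize (Hh2 u v Hu Hv). nra.
    rewrite (fsum_ext n _ (fun u => 2 * eps * fsum n (fun v => a u v))).
    rewrite fsum_scal, Hm. lra. intros; apply fsum_scal. }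
  assert (T4 : fsum n (fun u => fsum n (fun v => if Nat.eqb v (p u) then M u else 0)) = Sw n E l p).
  { unfold Sw. apply fsum_ext. intros u Hu. apply fsum_ind. apply (V u Hu). }
  assert (X : fsum n (fun u => fsum n (fun v => hh E l u v * M u + hh E l u v * M v + hh E l u v * eps
        - (if Nat.eqb v (p u) then M u else 0))) =
     fsum n (fun u => fsum n (fun v => hh E l u v * M u)) + fsum n (fun u => fsum n (fun v => hh E l u v * M v))
     + fsum n (fun u => fsum n (fun v => hh E l u v * eps)) - fsum n (fun u => fsum n (fun v => if Nat.eqb v (p u) then M u else 0))).
  { rewrite <- !fsum_plus, <- fsum_minus. apply fsum_ext; intros.
    rewrite <- !fsum_plus, <- fsum_minus. auto. }
  lra.
Qed.


Lemma fsum_pair n (c : nat -> nat) u v (X : R) : (c u < n)%nat ->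
  fsum n (fun k => if andb (Nat.eqb (c u) k) (Nat.eqb (c v) k) then X else 0) =
  if Nat.eqb (c u) (c v) then X else 0.
Proof.
  intros Hc. destruct (Nat.eqb_spec (c u) (c v)).
  - rewrite <- e. transitivity (fsum n (fun i => if Nat.eqb i (c u) then X else 0)).
    apply fsum_ext. intros i Hi. rewrite (Nat.eqb_sym (c u) i). destruct (Nat.eqb i (c u)); simpl; auto.
    apply fsum_ind; auto.
  - transitivity (fsum n (fun _ => 0)); [|apply fsum_zero]. apply fsum_ext. intros i Hi.
    destruct (Nat.eqb_spec (c u) i); destruct (Nat.eqb_spec (c v) i); simpl; auto; exfalso; lia.
Qed.

Lemma Mod_expand n E l (c : nat -> nat) : (forall u, (u < n)%nat -> (c u < n)%nat) ->
  Mod n E l c = / (2 * mtot n E l) * fsum n (fun u => fsum n (fun v =>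
     if Nat.eqb (c u) (c v) then adj E l u v - deg n E l u * deg n E l v / (2 * mtot n E l) else 0)).
Proof.
  intros Hc. unfold Mod, Mod_cluster. cbv zeta. rewrite fsum_scal. f_equal.
  rewrite fsum_swap. apply fsum_ext. intros u Hu. rewrite fsum_swap. apply fsum_ext. intros v Hv.
  apply fsum_pair. auto.
Qed.

Lemma Mod_lower n E l p : wgraph n E l -> valid n E l p -> mtot n E l > 0 ->
  Mod n E l (fun u => Nat.min u (p u)) >= Sw n E l p / (2 * mtot n E l) - dmax n E l / mtot n E l.
Proof.
  intros G V Hm. set (c := fun u => Nat.min u (p u)).
  rewrite Mod_expand by (intros; unfold c; lia).
  set (m := mtot n E l). set (D := dmax n E l). assert (Hm2 : m > 0) by exact Hm.
  assert (Hd0 : forall u, (u < n)%nat -> 0 <= deg n E l u).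
  { intros; unfold deg; apply fsum_nonneg; intros; eapply adj_nonneg; eauto. }
  assert (HdD : forall u, (u < n)%nat -> deg n E l u <= D) by (intros; apply deg_le_dmax; auto).
  assert (P : fsum n (fun u => fsum n (fun v => (if Nat.eqb v (p u) then Mw E l p u else 0)
      - (if Nat.eqb v u then deg n E l u * D / (2 * m) else 0)
      - (if Nat.eqb v (p u) then deg n E l u * D / (2 * m) else 0)))
     <= fsum n (fun u => fsum n (fun v =>
     if Nat.eqb (c u) (c v) then adj E l u v - deg n E l u * deg n E l v / (2 * m) else 0))).
  { apply fsum_le; intros u Hu; apply fsum_le; intros v Hv.
    destruct (V u Hu) as (P1&P2&P3).
    assert (Q1 : 0 <= deg n E l u * D / (2 * m)).
    { apply Rmult_le_pos; [|left; apply Rinv_0_lt_compat; lra].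
      apply Rmult_le_pos; auto. eapply Rle_trans; [apply (Hd0 u Hu)|auto]. }
    assert (Q2 : deg n E l u * deg n E l v / (2 * m) <= deg n E l u * D / (2 * m)).
    { unfold Rdiv. apply Rmult_le_compat_r; [left; apply Rinv_0_lt_compat; lra|].
      apply Rmult_le_compat_l; auto. }
    assert (Q3 : 0 <= adj E l u v) by (eapply adj_nonneg; eauto).
    assert (Q4 : Nat.eqb v (p u) = true -> Mw E l p u <= adj E l u v).
    { intros Hv'. apply Nat.eqb_eq in Hv'. subst v. unfold Mw. destruct (Nat.eqb _ _); lra. }
    destruct (Nat.eqb_spec (c u) (c v)).
    - assert (v = u \/ v = p u).
      { unfold c in e. destruct (V v Hv) as (V1&V2&V3).
        destruct (Nat.le_ge_cases u (p u)); destruct (Nat.le_ge_cases v (p v));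
        [rewrite (Nat.min_l u), (Nat.min_l v) in e by auto
        |rewrite (Nat.min_l u), (Nat.min_r v) in e by auto
        |rewrite (Nat.min_r u), (Nat.min_l v) in e by auto
        |rewrite (Nat.min_r u), (Nat.min_r v) in e by auto].
        - left; auto.
        - right. rewrite e, V2. auto.
        - right; auto.
        - left. rewrite <- P2, e, V2. auto. }
      destruct (Nat.eqb_spec v (p u)); destruct (Nat.eqb_spec v u); try (destruct H; congruence);
        specialize (Q4 (eq_refl _)) || idtac; try lra.
    - destruct (Nat.eqb_spec v (p u)).
      + exfalso. apply n0. unfold c. subst v. rewrite P2. lia.
      + destruct (Nat.eqb_spec v u). subst; tauto. lra. }
  assert (X : fsum n (fun u => fsum n (fun v => (if Nat.eqb v (p u) then Mw E l p u else 0)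
      - (if Nat.eqb v u then deg n E l u * D / (2 * m) else 0)
      - (if Nat.eqb v (p u) then deg n E l u * D / (2 * m) else 0))) = Sw n E l p - 2 * D).
  { rewrite (fsum_ext n _ (fun u => Mw E l p u - 2 * (D / (2 * m)) * deg n E l u)).
    rewrite fsum_minus, fsum_scal. unfold Sw. replace (fsum n (deg n E l)) with (2 * m).
    field. lra. unfold m, mtot. lra.
    intros u Hu. rewrite !fsum_minus. rewrite !fsum_ind; try apply (V u Hu); auto. field. lra. }
  rewrite X in P. apply Rle_ge.
  replace (Sw n E l p / (2 * m) - D / m) with (/ (2 * m) * (Sw n E l p - 2 * D)) by (field; lra).
  apply Rmult_le_compat_l; auto. left; apply Rinv_0_lt_compat; lra.
Qed.


Lemma arith D m S : D >= 1 -> m > 0 -> S >= 0 -> 64 * D^3 < m ->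
  m <= (4 * D - 1) * S + 4 * m * (1 / (256 * D^2)) ->
  S / (2 * m) - D / m > 1 / (8 * D).
Proof.
  intros HD Hm HS Hbig Hmain.
  assert (E1 : 4 * m * (1 / (256 * D^2)) = m / (64 * D^2)) by (field; lra).
  rewrite E1 in Hmain.
  assert (E2 : m / (64 * D^2) <= m / (64 * D)).
  { apply Rmult_le_compat_l; [lra|]. apply Rinv_le_contravar; nra. }
  set (q := m / (64 * D)). assert (Hqd : q = m / (64 * D)) by reflexivity.
  assert (Hq : m = 64 * D * q) by (unfold q; field; lra).
  assert (Hq2 : D^2 < q).
  { assert (64 * D^3 < 64 * D * q) by lra. assert (D > 0) by lra.
    apply Rmult_lt_reg_l with (64 * D); [lra|]. replace (64 * D * D^2) with (64 * D^3) by ring. lra. }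
  (* S (4D-1) >= m - q = 63 D q ... we want S > m/(4D) + 2D = 16 q + 2D *)
  assert (HS2 : (4 * D - 1) * S >= 64 * D * q - q) by lra.
  assert (HS3 : S > 16 * q + 2 * D).
  { assert (8*D^2 - 2*D < 15*q) by (assert (D^2 >= 1) by nra; lra).
    assert (X : (4 * D - 1) * (16 * q + 2 * D) = 64 * D * q - q - (15 * q - (8 * D^2 - 2 * D))) by ring.
    assert ((4 * D - 1) * (16 * q + 2 * D) < (4 * D - 1) * S) by lra.
    apply Rmult_lt_reg_l with (4 * D - 1); lra. }
  assert (Goal : S / (2 * m) - D / m - 1 / (8 * D) = (S - 16 * q - 2 * D) / (2 * m)).
  { assert (q > 0) by (assert (D^2 >= 1) by nra; lra). rewrite Hq. field. split; lra. }
  assert ((S - 16 * q - 2 * D) / (2 * m) > 0).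
  { apply Rdiv_lt_0_compat; lra. }
  lra.
Qed.


Lemma fsum_const n c : fsum n (fun _ => c) = INR n * c.
Proof. induction n; simpl fsum; [simpl; lra|]. rewrite IHn, S_INR. lra. Qed.

Lemma rpow_facts n : (3 <= n)%nat ->
  Rpower (INR n) (1/5) >= 1 /\ (Rpower (INR n) (1/5))^5 = INR n /\ ln (INR n) >= 1.
Proof.
  intros Hn. assert (Hn' : INR n >= 3) by (apply Rle_ge; replace 3 with (INR 3) by (simpl; lra); apply le_INR; auto).
  assert (Hl : ln (INR n) >= 1).
  { rewrite <- (ln_exp 1). assert (exp 1 <= 3) by apply exp_le_3.
    destruct (Rle_lt_or_eq_dec (exp 1) (INR n)). lra.
    left. apply ln_increasing; auto. apply exp_pos. rewrite e. lra. }
  split; [|split]; auto.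
  - unfold Rpower. rewrite <- exp_0. apply Rle_ge.
    left. apply exp_increasing. rewrite exp_0; lra.
  - rewrite <- Rpower_pow. rewrite Rpower_mult. replace (1/5 * INR 5) with 1 by (simpl; lra).
    apply Rpower_1; lra. unfold Rpower. apply exp_pos.
Qed.


Theorem lemma11 :
  exists N : nat, forall n : nat, (N <= n)%nat ->
  forall (E : nat -> nat -> bool) (l : nat -> nat -> R),
    wgraph n E l ->
    connected n E ->
    normalized n E l ->
    dmax n E l < Rpower (INR n) (1/5) / (16 * ln (INR n)) ->
    OPT_gt n E l (1 / (8 * dmax n E l)).
Proof.
  exists 3%nat. intros n Hn E l G C Nrm Hd.
  destruct (rpow_facts n Hn) as (Hx1 & Hx5 & Hln).
  set (x := Rpower (INR n) (1/5)) in *.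
  set (D := dmax n E l) in *. set (m := mtot n E l).
  assert (Hn3 : INR n >= 3) by (apply Rle_ge; replace 3 with (INR 3) by (simpl; lra); apply le_INR; auto).
  assert (HE : fsum n (fun u => fsum n (fun v => if E u v then 1 else 0)) = 2 * m).
  { destruct G as (G1&G2&_). rewrite edges_double with (n:=n) by auto. unfold m, mtot.
    rewrite Nrm. unfold num_edges. lra. }
  assert (Hrow : forall u, (u < n)%nat -> 1 <= fsum n (fun v => if E u v then 1 else 0)).
  { intros u Hu. set (v' := if Nat.eqb u 0 then 1%nat else 0%nat).
    assert (Hv' : (v' < n)%nat) by (unfold v'; destruct (Nat.eqb u 0); lia).
    assert (Hvu : v' <> u) by (unfold v'; destruct (Nat.eqb_spec u 0); lia).
    destruct (reach_last _ _ _ _ (C v' u Hv' Hu)) as [Hc | (w & Hw & Hew)]; [congruence|].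
    destruct G as (G1&_). rewrite G1 in Hew by auto.
    assert (T := fsum_ge_term n (fun v => if E u v then 1 else 0) w).
    simpl in T. rewrite Hew in T. apply T; auto. intros i _. destruct (E u i); lra. }
  assert (Hm : INR n <= 2 * m).
  { rewrite <- HE. rewrite <- (Rmult_1_r (INR n)). rewrite <- fsum_const. apply fsum_le; auto. }
  assert (Hm0 : m > 0) by lra.
  assert (HD1 : D >= 1).
  { assert (fsum n (deg n E l) <= fsum n (fun _ => D)) by (apply fsum_le; intros; apply deg_le_dmax; auto).
    rewrite fsum_const in H. assert (fsum n (deg n E l) = 2 * m) by (unfold m, mtot; lra).
    assert (INR n * 1 <= INR n * D) by lra. apply Rle_ge. apply Rmult_le_reg_l with (INR n); lra. }
  assert (HDx : D < x / 16).
  { eapply Rlt_le_trans; [apply Hd|]. unfold Rdiv. apply Rmult_le_compat_l; [lra|].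
    apply Rinv_le_contravar; lra. }
  assert (HD3 : 64 * D^3 < m).
  { assert (D^3 < (x/16)^3).
    { set (y := x/16) in *. assert (D*D < y*y) by nra. assert (D*D*D < y*y*y) by nra.
      replace (D^3) with (D*D*D) by ring. replace (y^3) with (y*y*y) by ring. lra. }
    assert (x^3 <= x^5).
    { replace (x^5) with (x^3 * x^2) by ring. assert (1 <= x^2) by nra. assert (0 <= x^3) by (apply pow_le; lra). nra. }
    assert ((x/16)^3 = x^3 / 4096) by (field). lra. }
  set (eps := 1 / (256 * D^2)).
  assert (He : eps > 0) by (unfold eps; apply Rdiv_lt_0_compat; [lra|]; assert (D^2 >= 1) by nra; lra).
  destruct (near_opt n E l eps G He) as (p & V & Hopt).
  assert (Hmain := main_count n E l p eps G Nrm V Hopt He).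
  assert (Hmod := Mod_lower n E l p G V Hm0).
  assert (HS : Sw n E l p >= 0) by (apply Rle_ge; apply fsum_nonneg; intros; apply Mw_nonneg with n; auto).
  assert (Har := arith D m (Sw n E l p) HD1 Hm0 HS HD3 Hmain).
  exists (fun u => Nat.min u (p u)). split.
  - intros v Hv. lia.
  - fold m D in Hmod. lra.
Qed.
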